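(* Let $n\ge 1$ be an integer and let $P_n$ denote the path on $n$ vertices. For any $x\in\mathbb{N}$ and any integer $y$ with $0\le y\le x$, except for the case $x=y=1$, we have \[ P(P_n,x,y) = \frac{\sqrt{(x+1)^2-4y}-x-1}{2\sqrt{(x+1)^2-4y}}\cdot \left( \frac{x-1-\sqrt{(x+1)^2-4y}}{2} \right)^n + \frac{\sqrt{(x+1)^2-4y}+x+1}{2\sqrt{(x+1)^2-4y}}\cdot \left( \frac{x-1+\sqrt{(x+1)^2-4y}}{2} \right)^n . \]
   Context: For a finite simple graph $G=(V,E)$, $x\in\mathbb{N}$ and $y\in\{0,\dots,x\}$, the bivariate chromatic polynomial $P(G,x,y)$ is the number of maps $f:V\to\{1,\dots,x\}$ such that for every edge $\{v,w\}\in E$, either $f(v)\neq f(w)$ or $f(v)=f(w)>y$. (Equivalently: colorings in which adjacent vertices receive different colors or share a color from $\{y+1,\dots,x\}$.) *)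

(* Defs.v *)
From HB Require Import structures.
From mathcomp Require Import all_boot all_order all_algebra.
Set Implicit Arguments. Unset Strict Implicit. Unset Printing Implicit Defensive.
Import Order.TTheory GRing.Theory Num.Theory.

(* A finite simple graph is given by a symmetric irreflexive relation e on a
   finType T.  Colors {1,...,x} are represented by 'I_x, color c : 'I_x
   standing for the integer c+1.  Thus "f v = f w > y" becomes
   "f v = f w /\ y < (f v).+1". *)
Definition bcp (T : finType) (e : rel T) (x y : nat) : nat :=
  #|[set f : {ffun T -> 'I_x} |
      [forall v, forall w, e v w ==> ((f v != f w) || (y < (f v).+1))]]|.

Definition path_rel (n : nat) : rel 'I_n :=
  fun i j => (i.+1 == j :> nat) || (j.+1 == i :> nat).

(* Main.v *)
Require Import Defs.
From mathcomp Require Import all_boot all_order all_algebra zify ring lra.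
Import Order.TTheory GRing.Theory Num.Theory.

Definition rr (y : nat) {x} (a b : 'I_x) : bool := (a != b) || (y < a.+1).
Definition good (y : nat) {x n} (f : {ffun 'I_n.+1 -> 'I_x}) :=
  [forall i : 'I_n, rr y (f (inord i)) (f (inord i.+1))].
Definition Acnt {x} y n (a : 'I_x) :=
  #|[set f : {ffun 'I_n.+1 -> 'I_x} | good y f && (f ord0 == a)]|.
Definition ext {x n} (a : 'I_x) (g : {ffun 'I_n.+1 -> 'I_x}) : {ffun 'I_n.+2 -> 'I_x} :=
  [ffun i : 'I_n.+2 => if (i : nat) is k.+1 then g (inord k) else a].
Definition res {x n} (f : {ffun 'I_n.+2 -> 'I_x}) : {ffun 'I_n.+1 -> 'I_x} :=
  [ffun j : 'I_n.+1 => f (lift ord0 j)].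

Lemma rr_sym y x (a b : 'I_x) : rr y a b = rr y b a.
Proof. rewrite /rr eq_sym; case: (eqVneq b a) => [->|_] //. Qed.

Lemma inord0' n : (inord 0 : 'I_n.+1) = ord0.
Proof. by apply/val_inj; rewrite /= inordK. Qed.

Lemma bcp_good x y n : bcp (@path_rel n.+1) x y = #|[set f : {ffun 'I_n.+1 -> 'I_x} | good y f]|.
Proof.
rewrite /bcp; apply: eq_card => f; rewrite !inE.
apply/forallP/forallP => H.
- move=> i; have Hi := ltn_ord i.
  have := H (inord i) => /forallP /(_ (inord i.+1)) /implyP; apply.
  by rewrite /path_rel !inordK ?eqxx //; lia.
- move=> v; apply/forallP => w; apply/implyP; rewrite /path_rel => /orP [] /eqP E.
  + have Hw := ltn_ord w; have Hv : (v < n)%N by lia.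
    have := H (Ordinal Hv) => /=; rewrite inord_val.
    by have -> : (inord v.+1 : 'I_n.+1) = w by apply/val_inj; rewrite /= inordK // E.
  + have Hv := ltn_ord v; have Hw : (w < n)%N by lia.
    have := H (Ordinal Hw) => /=; rewrite inord_val rr_sym.
    by have -> : (inord w.+1 : 'I_n.+1) = v by apply/val_inj; rewrite /= inordK // E.
Qed.

Lemma Acnt0 x y (a : 'I_x) : Acnt y 0 a = 1%N.
Proof.
rewrite /Acnt (_ : [set f | _] = [set [ffun=> a]]) ?cards1 //.
apply/setP => f; rewrite !inE.
have -> : good y f = true by apply/forallP => -[].
apply/eqP/eqP => [<-|->]; last by rewrite ffunE.
by apply/ffunP => i; rewrite ffunE (ord1 i).
Qed.

Lemma extE x n (a : 'I_x) (g : {ffun 'I_n.+1 -> 'I_x}) (k : nat) : (k < n.+1)%N -> ext a g (inord k.+1) = g (inord k).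
Proof. move=> Hk; rewrite ffunE inordK //; lia. Qed.
Lemma extE0 x n (a : 'I_x) (g : {ffun 'I_n.+1 -> 'I_x}) : ext a g (inord 0) = a.
Proof. by rewrite ffunE inordK. Qed.

Lemma good_ext x y n (a : 'I_x) (g : {ffun 'I_n.+1 -> 'I_x}) :
  good y (ext a g) = rr y a (g ord0) && good y g.
Proof.
apply/forallP/andP.
- move=> H; split.
  + by have := H ord0; rewrite /= extE0 extE // inord0'.
  + apply/forallP => i; have Hi := ltn_ord i.
    have Hi' : (i.+1 < n.+1)%N by lia.
    by have := H (Ordinal Hi') => /=; rewrite !extE //; lia.
- case=> H1 /forallP H2 [[|k] Hk] /=.
  + by rewrite extE0 extE // inord0'.
  + have Hk' : (k < n)%N by lia.
    by have := H2 (Ordinal Hk') => /=; rewrite !extE //; lia.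
Qed.

Lemma AcntS x y n (a : 'I_x) : Acnt y n.+1 a = (\sum_(c | rr y a c) Acnt y n c)%N.
Proof.
rewrite /Acnt.
have -> : [set f : {ffun 'I_n.+2 -> 'I_x} | good y f && (f ord0 == a)] =
          ext a @: [set g : {ffun 'I_n.+1 -> 'I_x} | good y g && rr y a (g ord0)].
{ apply/setP => f; rewrite inE; apply/andP/imsetP.
  - case=> Hg /eqP Ha.
    have E : ext a (res f) = f.
    { apply/ffunP => i; rewrite ffunE; case: i => [[|k] Hk] /=.
      - by rewrite -Ha; congr (f _); apply val_inj.
      - rewrite ffunE; congr (f _); apply val_inj; rewrite /= inordK //. }
    exists (res f); last by rewrite E.
    by rewrite inE; rewrite -E good_ext in Hg; rewrite andbC.
  - case=> g; rewrite inE => /andP [H1 H2] ->.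
    by split; [rewrite good_ext H1 H2 | rewrite ffunE /=]. }
rewrite card_imset; last first.
{ move=> g1 g2 E; apply/ffunP => j.
  have := congr1 (fun F : {ffun 'I_n.+2 -> 'I_x} => F (lift ord0 j)) E; rewrite !ffunE /=.
  by rewrite inord_val. }
rewrite -sum1_card. rewrite (partition_big (fun g : {ffun 'I_n.+1 -> 'I_x} => g ord0) (rr y a)) /=; last first.
  by move=> g; rewrite inE => /andP [].
apply: eq_bigr => c Hc; rewrite -sum1_card; apply: eq_bigl => g; rewrite !inE.
by case: (eqVneq (g ord0) c) => [->|]; rewrite ?Hc ?andbT ?andbF.
Qed.

Lemma bcp_sum x y n : bcp (@path_rel n.+1) x y = (\sum_(c : 'I_x) Acnt y n c)%N.
Proof.
rewrite bcp_good -sum1_card (partition_big (fun g : {ffun 'I_n.+1 -> 'I_x} => g ord0) xpredT) //=.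
apply: eq_bigr => c _; rewrite /Acnt -sum1_card; apply: eq_bigl => g; rewrite !inE.
by [].
Qed.

Local Open Scope ring_scope.


Definition SS (R : numDomainType) x y n : R := \sum_(c : 'I_x) (Acnt y n c)%:R.
Definition WW (R : numDomainType) x y n : R := \sum_(c : 'I_x | (c < y)%N) (Acnt y n c)%:R.

Lemma AcntSR (R : numDomainType) x y n (a : 'I_x) :
  (Acnt y n.+1 a)%:R = SS R x y n - (if (a < y)%N then (Acnt y n a)%:R else 0) :> R.
Proof.
rewrite AcntS natr_sum /SS; case: ltnP => Ha.
- rewrite [in RHS](bigD1 a) //= addrC addrK; apply: eq_bigl => c.
  by rewrite /rr eq_sym ltnS leqNgt Ha orbF.
- by rewrite subr0; apply: eq_bigl => c; rewrite /rr ltnS Ha orbT.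
Qed.

Lemma card_lt (R : numDomainType) x y : (y <= x)%N -> #|[pred c : 'I_x | (c < y)%N]| = y.
Proof.
move=> Hyx; rewrite -sum1_card.
rewrite (eq_bigl (fun i : 'I_x => true && (i < y)%N)) //.
by rewrite -(big_ord_widen_cond _ (fun _ => true) (fun _ => 1%N)) // sum1_card card_ord.
Qed.

Lemma SS_S (R : numDomainType) x y n : SS R x y n.+1 = x%:R * SS R x y n - WW R x y n.
Proof.
rewrite /SS; under eq_bigr => a _ do rewrite AcntSR.
rewrite sumrB sumr_const card_ord mulr_natl -big_mkcond //.
Qed.

Lemma WW_S (R : numDomainType) x y n : (y <= x)%N -> WW R x y n.+1 = y%:R * SS R x y n - WW R x y n.
Proof.
move=> Hyx; rewrite /WW.
under eq_bigr => a Ha do rewrite AcntSR Ha.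
by rewrite sumrB sumr_const card_lt // mulr_natl.
Qed.

Lemma SS0 (R : numDomainType) x y : SS R x y 0 = x%:R.
Proof.
rewrite /SS; under eq_bigr => a _ do rewrite Acnt0.
by rewrite sumr_const card_ord.
Qed.

Lemma WW0 (R : numDomainType) x y : (y <= x)%N -> WW R x y 0 = y%:R.
Proof.
move=> Hyx; rewrite /WW; under eq_bigr => a _ do rewrite Acnt0.
by rewrite sumr_const card_lt.
Qed.


Theorem theorem1 (R : rcfType) (n x y : nat) :
  (1 <= n)%N -> (y <= x)%N -> ~ (x = 1%N /\ y = 1%N) ->
  let d : R := Num.sqrt ((x%:R + 1) ^+ 2 - 4 * y%:R) in
  (bcp (@path_rel n) x y)%:R =
    (d - x%:R - 1) / (2 * d) * ((x%:R - 1 - d) / 2) ^+ n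
  + (d + x%:R + 1) / (2 * d) * ((x%:R - 1 + d) / 2) ^+ n.
Proof.
move=> Hn Hyx Hxy d.
case: n Hn => // m _.
rewrite bcp_sum natr_sum -/(SS R x y m).
have hnat : (4 * y < (x + 1) * (x + 1))%N.
{ case: (eqVneq x 1%N) => [Ex|Ex].
  - have : y <> 1%N by move=> Ey; apply: Hxy.
    move=> Hy; subst x; lia.
  - nia. }
set D : R := (x%:R + 1) ^+ 2 - 4 * y%:R.
have hD : 0 < D.
{ rewrite /D subr_gt0; move: hnat; rewrite -(ltr_nat R) !natrM natrD.
  by rewrite expr2. }
have hd2 : d ^+ 2 = D by rewrite /d sqr_sqrtr // ltW.
have hdp : 0 < d by rewrite /d sqrtr_gt0.
have hd0 : d != 0 by rewrite gt_eqF.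
have h20 : (2 : R) != 0 by rewrite pnatr_eq0.
pose r1 := (x%:R - 1 - d) / 2; pose r2 := (x%:R - 1 + d) / 2.
pose F k := (d - x%:R - 1) / (2 * d) * r1 ^+ k + (d + x%:R + 1) / (2 * d) * r2 ^+ k.
have E1 : r1 ^+ 2 = (x%:R - 1) * r1 + (x%:R - y%:R).
{ have : r1 ^+ 2 = (x%:R - 1) * r1 + (x%:R - y%:R) + (d ^+ 2 - D) / 4.
    by rewrite /r1 /D; field.
  by rewrite hd2 subrr mul0r addr0. }
have E2 : r2 ^+ 2 = (x%:R - 1) * r2 + (x%:R - y%:R).
{ have : r2 ^+ 2 = (x%:R - 1) * r2 + (x%:R - y%:R) + (d ^+ 2 - D) / 4.
    by rewrite /r2 /D; field.
  by rewrite hd2 subrr mul0r addr0. }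
have Ek : forall (r : R) k, r ^+ 2 = (x%:R - 1) * r + (x%:R - y%:R) ->
    r ^+ k.+2 = (x%:R - 1) * r ^+ k.+1 + (x%:R - y%:R) * r ^+ k.
{ move=> r k E; rewrite !exprS mulrA -expr2 E; ring. }
have HF : forall k, F k.+2 = (x%:R - 1) * F k.+1 + (x%:R - y%:R) * F k.
{ move=> k; rewrite /F (Ek r1 k E1) (Ek r2 k E2); ring. }
have F0 : F 0%N = 1 by rewrite /F !expr0; field.
have F1 : F 1%N = x%:R by rewrite /F !expr1 /r1 /r2; field.
have F2 : F 2%N = x%:R * x%:R - y%:R by rewrite HF F1 F0; ring.
have claim : forall k, SS R x y k = F k.+1 /\ WW R x y k = x%:R * F k.+1 - F k.+2.
{ elim=> [|k [IH1 IH2]].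
  - by rewrite SS0 WW0 // F1 F2; split; ring.
  - rewrite SS_S WW_S // IH1 IH2; split; first ring.
    rewrite (HF k.+1); ring. }
by case: (claim m).
Qed.
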